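(* Let $X$ be a smooth projective toric variety with lattice of one-parameter subgroups $N$, and let $p_1,p_2\in X$ be two distinct points. Then there exists $v\in N$ such that the limits $$q_1=\lim_{t\to0}t^v\cdot p_1,\qquad q_2=\lim_{t\to0}t^v\cdot p_2$$ are two distinct points each of which is either torus-invariant or lies on a torus-invariant curve.
   Context: For $v\in N$, $t\mapsto t^v$ denotes the corresponding one-parameter subgroup of the torus acting on $X$. *)

(* Defs.v *)
From HB Require Import structures.
From mathcomp Require Import all_boot all_order all_algebra.
From mathcomp Require Import finmap.
Set Implicit Arguments. Unset Strict Implicit. Unset Printing Implicit Defensive.
Import Order.TTheory GRing.Theory Num.Theory.
Local Open Scope ring_scope.
Local Open Scope fset_scope.

(* N = M = Z^n, both represented by row vectors of integers. *)
Definition lat (n : nat) := 'rV[int]_n.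

Definition pair n (m v : lat n) : int := \sum_(i < n) m ord0 i * v ord0 i.

(* a cone is given by its (finite) set of ray generators *)
Definition cone n := {fset lat n}.

(* lattice point v lies in the real cone generated by sigma
   (nonnegative rational coefficients suffice for rational cones) *)
Definition inCone n (sigma : cone n) (v : lat n) : Prop :=
  exists a : lat n -> rat, (forall u, 0 <= a u) /\
    map_mx (intr : int -> rat) v
      = \sum_(u <- sigma) a u *: map_mx (intr : int -> rat) u.

Definition inDual n (sigma : cone n) (m : lat n) : Prop :=
  forall u, u \in sigma -> 0 <= pair m u.

Definition perp n (tau : cone n) (m : lat n) : Prop :=
  forall u, u \in tau -> pair m u = 0.

Definition smooth_cone n (sigma : cone n) : Prop :=
  exists B : 'M[int]_n, (\det B = 1 \/ \det B = -1) /\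
    forall u, u \in sigma -> exists i, row i B = u.

(* smooth fan: smooth cones, closed under faces (subsets of generators),
   any two meeting in a common face *)
Definition smooth_fan n (F : {fset cone n}) : Prop :=
  [/\ forall sigma, sigma \in F -> smooth_cone sigma,
      forall sigma tau, sigma \in F -> tau `<=` sigma -> tau \in F &
      forall sigma sigma', sigma \in F -> sigma' \in F ->
        forall v, inCone sigma v -> inCone sigma' v -> inCone (sigma `&` sigma') v].

Definition complete_fan n (F : {fset cone n}) : Prop :=
  forall v : lat n, exists2 sigma, sigma \in F & inCone sigma v.

(* projectivity: existence of a strictly convex support function, given by
   its linear pieces m_sigma on the maximal (n-dimensional) cones *)
Definition projective_fan n (F : {fset cone n}) : Prop :=
  exists msig : cone n -> lat n,
    forall sigma sigma', sigma \in F -> sigma' \in F ->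
      #|` sigma| = n -> #|` sigma'| = n ->
      forall v, inCone sigma' v ->
        pair (msig sigma') v <= pair (msig sigma) v /\
        (pair (msig sigma') v = pair (msig sigma) v <-> inCone sigma v).

Definition smooth_projective_fan n (F : {fset cone n}) : Prop :=
  [/\ smooth_fan F, complete_fan F & projective_fan F].

(* A closed point of X_F over k: a cone tau of F (its orbit O(tau)) together
   with a group homomorphism tau^perp \cap M -> k^*, extended by 0 outside
   tau^perp (so that the representation is canonical). *)
Definition point (k : fieldType) n := (cone n * (lat n -> k))%type.

Definition is_point (k : fieldType) n (F : {fset cone n}) (p : point k n) : Prop :=
  [/\ p.1 \in F,
      forall m, p.2 m != 0 <-> perp p.1 m &
      forall m m', perp p.1 m -> perp p.1 m' -> p.2 (m + m')%R = p.2 m * p.2 m'].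

Definition act (k : fieldType) n (v : lat n) (t : k) (p : point k n) : point k n :=
  (p.1, fun m => t ^ (pair m v) * p.2 m).

(* q = lim_{t -> 0} t^v . p : there is an affine chart U_sigma containing
   p and q such that every coordinate function chi^m (m in sigma^vee)
   along t |-> t^v . p (t <> 0) is a polynomial map t |-> c t^e, whose value
   at t = 0 is the coordinate chi^m of q.  (In U_sigma, the coordinate chi^m
   of a point (tau, gamma), tau a face of sigma, is gamma m.) *)
Definition is_limit (k : fieldType) n (F : {fset cone n}) (v : lat n)
    (p q : point k n) : Prop :=
  exists2 sigma, sigma \in F &
    [/\ p.1 `<=` sigma, q.1 `<=` sigma &
        forall m, inDual sigma m ->
          exists e : nat,
            (forall t : k, t != 0 -> (act v t p).2 m = p.2 m * t ^+ e) /\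
            q.2 m = p.2 m * 0 ^+ e].

(* p is torus-invariant: its orbit is a point, i.e. its cone is maximal *)
Definition torus_fixed (k : fieldType) n (p : point k n) : Prop := #|` p.1| = n.

(* p lies on a torus-invariant curve V(tau), dim tau = n - 1 *)
Definition on_invariant_curve (k : fieldType) n (F : {fset cone n})
    (p : point k n) : Prop :=
  exists2 tau, tau \in F & (#|` tau|.+1 = n)%N /\ tau `<=` p.1.

(* Main.v *)
Require Import Defs.
From HB Require Import structures.
From mathcomp Require Import all_boot all_order all_algebra.
From mathcomp Require Import finmap.
From mathcomp Require Import ring lra zify.
From Stdlib Require Import FunctionalExtensionality.
Set Implicit Arguments. Unset Strict Implicit. Unset Printing Implicit Defensive.
Import Order.TTheory GRing.Theory Num.Theory.
Local Open Scope ring_scope.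


Section Basic.
Variable n : nat.
Implicit Types (m u v x : lat n) (B : 'M[int]_n).

Lemma pair0r m : pair m 0 = 0.
Proof. by rewrite /pair big1 // => i _; rewrite mxE mulr0. Qed.
Lemma pairDr m u v : pair m (u + v) = pair m u + pair m v.
Proof. by rewrite /pair -big_split; apply: eq_bigr => i _; rewrite mxE mulrDr. Qed.
Lemma pairZr m (c : int) u : pair m (c *: u) = c * pair m u.
Proof. by rewrite /pair mulr_sumr; apply: eq_bigr => i _; rewrite mxE mulrCA. Qed.
Lemma pair0l m : pair 0 m = 0.
Proof. by rewrite /pair big1 // => i _; rewrite mxE mul0r. Qed.
Lemma pairDl m u v : pair (u + v) m = pair u m + pair v m.
Proof. by rewrite /pair -big_split; apply: eq_bigr => i _; rewrite mxE mulrDl. Qed.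
Lemma pairZl m (c : int) u : pair (c *: u) m = c * pair u m.
Proof. by rewrite /pair mulr_sumr; apply: eq_bigr => i _; rewrite mxE mulrA. Qed.
Lemma pair_sumr (I : Type) (r : seq I) (P : pred I) m (F : I -> lat n) :
  pair m (\sum_(i <- r | P i) F i) = \sum_(i <- r | P i) pair m (F i).
Proof. exact: (big_morph (pair m) (pairDr m) (pair0r m)). Qed.
Lemma pair_suml (I : Type) (r : seq I) (P : pred I) m (F : I -> lat n) :
  pair (\sum_(i <- r | P i) F i) m = \sum_(i <- r | P i) pair (F i) m.
Proof. apply: (big_morph (fun y => pair y m) (id1:=0) (op1:=+%R)); [by move=> *; apply: pairDl | exact: pair0l]. Qed.

Definition dual B (i : 'I_n) : lat n := \row_k (invmx B) k i.

Definition unimod B := \det B = 1 \/ \det B = -1.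

Lemma unimod_unit B : unimod B -> B \in unitmx.
Proof. by rewrite unitmxE => -[] ->; rewrite ?unitr1 ?unitrN1. Qed.

Lemma pair_dual_row B i j : unimod B -> pair (dual B i) (row j B) = (j == i)%:R.
Proof.
move=> /unimod_unit uB; rewrite /pair.
have := congr1 (fun M : 'M_n => M j i) (mulmxV uB).
rewrite !mxE => <-; apply: eq_bigr => k _; by rewrite !mxE mulrC.
Qed.

Lemma row_inj B : unimod B -> injective (fun i => row i B).
Proof.
move=> uB i j /= eij; apply/eqP; rewrite eq_sym.
have := pair_dual_row i i uB; rewrite eij pair_dual_row //.
rewrite eqxx; case: (j == i) => // /eqP; by rewrite eq_sym oner_eq0.
Qed.

Lemma expand_row B x : unimod B -> x = \sum_i pair (dual B i) x *: row i B.
Proof.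
move=> /unimod_unit uB.
rewrite -{1}[x]mulmx1 -(mulVmx uB) mulmxA mulmx_sum_row.
apply: eq_bigr => i _; congr (_ *: _); rewrite /pair !mxE.
by apply: eq_bigr => k _; rewrite !mxE mulrC.
Qed.

Lemma expand_dual B m : unimod B -> m = \sum_i pair m (row i B) *: dual B i.
Proof.
move=> /unimod_unit uB.
rewrite -{1}[m]mulmx1 -trmx1 -(mulVmx uB) trmx_mul mulmxA mulmx_sum_row.
apply: eq_bigr => i _; congr (_ *: _).
  by rewrite /pair !mxE; apply: eq_bigr => k _; rewrite !mxE.
by apply/rowP => k; rewrite !mxE.
Qed.

Lemma pair_dual_sum B (c : 'I_n -> int) i : unimod B ->
  pair (dual B i) (\sum_k c k *: row k B) = c i.
Proof.
move=> uB; rewrite pair_sumr (bigD1 i) //= big1 ?addr0.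
  by rewrite pairZr pair_dual_row // eqxx mulr1.
by move=> k /negbTE kn; rewrite pairZr pair_dual_row // kn mulr0.
Qed.

Definition Q (y : lat n) : 'rV[rat]_n := map_mx (intr : int -> rat) y.

Lemma pairQ d y : (pair d y)%:~R = \sum_k (d 0 k)%:~R * (Q y) 0 k :> rat.
Proof. by rewrite /pair rmorph_sum; apply: eq_bigr => k _; rewrite rmorphM mxE. Qed.

Lemma coord B (sig : cone n) (a : lat n -> rat) x : unimod B ->
  (forall u, u \in sig -> exists j, row j B = u) ->
  Q x = \sum_(u <- sig) a u *: Q u ->
  forall i, (pair (dual B i) x)%:~R = if row i B \in sig then a (row i B) else 0 :> rat.
Proof.
move=> uB sB Hx i; rewrite pairQ Hx.
under eq_bigr => k _ do rewrite summxE mulr_sumr.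
rewrite exchange_big /=.
have E : forall u, u \in sig -> \sum_k (dual B i 0 k)%:~R * (a u *: Q u) 0 k
     = if u == row i B then a u else 0.
  move=> u us; transitivity (a u * (pair (dual B i) u)%:~R).
    rewrite pairQ mulr_sumr; by apply: eq_bigr => k _; rewrite !mxE mulrCA.
  have [j <-] := sB u us; rewrite pair_dual_row //.
  rewrite (inj_eq (row_inj uB)); case: (j == i); by rewrite ?mulr1 ?mulr0.
rewrite (eq_big_seq _ E) -big_mkcond /=.
case: ifP => ri.
  exact: (@fbig_pred1_inj _ _ _ _ _ a id sig (row i B) ri (@inj_id _)).
by rewrite big1_seq // => u /andP[/eqP -> ]; rewrite ri.
Qed.
Lemma Q_sum (I : Type) (r : seq I) (P : pred I) (F : I -> lat n) :
  Q (\sum_(i <- r | P i) F i) = \sum_(i <- r | P i) Q (F i).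
Proof.
apply/rowP => k; rewrite !mxE !summxE rmorph_sum; apply: eq_bigr => i _; by rewrite mxE.
Qed.

Lemma QZ (c : int) u : Q (c *: u) = c%:~R *: Q u.
Proof. by apply/rowP => k; rewrite !mxE rmorphM. Qed.

Lemma inCone_sum (sig : cone n) : inCone sig (\sum_(u <- sig) u).
Proof.
exists (fun _ => 1); split => //.
change (Q (\sum_(u <- sig) u) = \sum_(u <- sig) 1 *: Q u); rewrite Q_sum; apply: eq_bigr => u _; by rewrite scale1r.
Qed.

Definition full B (sig : cone n) :=
  unimod B /\ (forall u, u \in sig -> exists j, row j B = u) /\ (forall i, row i B \in sig).

Lemma full_perm B sig : full B sig -> perm_eq sig [seq row i B | i <- enum 'I_n].
Proof.
move=> [uB [sB rB]]; apply: uniq_perm.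
- exact: fset_uniq.
- by rewrite map_inj_uniq ?enum_uniq //; exact: row_inj.
move=> u; apply/idP/mapP => [/sB [j <-]| [j _ ->]]; last exact: rB.
by exists j; rewrite ?mem_enum.
Qed.

Lemma sum_full (V : nmodType) B sig (F : lat n -> V) : full B sig ->
  \sum_(u <- sig) F u = \sum_i F (row i B).
Proof.
move=> fB; rewrite (perm_big _ (full_perm fB)) big_map; by rewrite big_enum.
Qed.

Lemma card_full B sig : full B sig -> #|` sig| = n.
Proof.
move=> fB; have := perm_size (full_perm fB); rewrite size_map size_enum_ord; exact.
Qed.

Lemma inCone_full B sig (c : 'I_n -> int) : full B sig -> (forall i, 0 <= c i) ->
  inCone sig (\sum_i c i *: row i B).
Proof.
move=> fB c0; have [uB [sB rB]] := fB.
have ac : forall j, \sum_i pair (dual B i) (row j B) * c i = c j.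
  move=> j; rewrite (bigD1 j) //= big1 ?addr0; first by rewrite pair_dual_row // eqxx mul1r.
  by move=> i ij; rewrite pair_dual_row // eq_sym (negbTE ij) mul0r.
exists (fun u => if u \in sig then (\sum_i pair (dual B i) u * c i)%:~R else 0); split.
  move=> u; case: ifP => // /sB [j <-]; by rewrite ac ler0z.
change (Q (\sum_i c i *: row i B) = \sum_(u <- sig)
  (if u \in sig then (\sum_i pair (dual B i) u * c i)%:~R else 0) *: Q u).
rewrite (sum_full _ fB) Q_sum; apply: eq_bigr => i _; by rewrite rB ac QZ.
Qed.

End Basic.

Section Arith.

Lemma digits (s : int) : 0 < s -> forall n (c : 'I_n -> int) (z : int),
  (forall k, `|c k| < s) -> `|z| < s ->
  \sum_(k < n) c k * s ^+ k + z * s ^+ n = 0 -> z = 0 /\ forall k, c k = 0.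
Proof.
move=> s0; elim=> [|n IH] c z cs zs.
  by rewrite big_ord0 add0r expr0 mulr1 => ->; split => // -[].
rewrite big_ord_recl expr0 mulr1.
under eq_bigr => k _ do rewrite lift0 exprS mulrCA.
rewrite exprS mulrCA -mulr_sumr -addrA -mulrDr.
set R := (X in s * X) => E.
have R0 : R = 0.
  apply/eqP; apply: contraTT (cs ord0) => R0.
  have -> : c ord0 = - (s * R) by apply/eqP; rewrite -addr_eq0 E.
  rewrite normrN normrM gtr0_norm // -leNgt ler_pMr //.
  by rewrite -gtz0_ge1 normr_gt0.
have [z0 c0] := IH (fun k => c (lift ord0 k)) z (fun k => cs _) zs R0.
split => // k; case: (unliftP ord0 k) => [j ->|->]; first exact: c0.
by move: E; rewrite R0 mulr0 addr0.
Qed.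

Lemma digits_bound (s : int) : 0 < s -> forall n (c : 'I_n -> int),
  (forall k, `|c k| < s) -> `|\sum_(k < n) c k * s ^+ k| < s ^+ n.
Proof.
move=> s0; elim=> [|n IH] c cs; first by rewrite big_ord0 normr0 expr0.
rewrite big_ord_recr /=.
have P0 : 0 < s ^+ n by rewrite exprn_gt0.
have h1 := IH (fun k => c (widen_ord (leqnSn n) k)) (fun k => cs _).
have h2 : `|c ord_max| <= s - 1 by have := cs ord_max; lia.
have h3 : `|c ord_max| * s ^+ n <= (s - 1) * s ^+ n by rewrite ler_wpM2r // ltW.
rewrite exprSr; apply: (le_lt_trans (ler_normD _ _)); rewrite normrM (gtr0_norm P0).
rewrite [s ^+ n * s]mulrC (_ : s * s ^+ n = s ^+ n + (s - 1) * s ^+ n); last by ring.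
exact: ltr_leD.
Qed.


End Arith.

Section Points.
Variables (k : fieldType) (n : nat).
Local Open Scope fset_scope.

Definition perpb (tau : cone n) (m : lat n) := all (fun u => pair m u == 0) tau.

Lemma perpP tau m : reflect (perp tau m) (perpb tau m).
Proof. by apply: (iffP allP) => H u /H /eqP. Qed.

Lemma limit_lemma (F : {fset cone n}) sig B (p : point k n) (v : lat n) :
  (forall sigma tau, sigma \in F -> tau `<=` sigma -> tau \in F) ->
  sig \in F -> full B sig -> is_point F p -> p.1 `<=` sig ->
  (forall i, row i B \notin p.1 -> 0 <= pair (dual B i) v) ->
  exists q : point k n, [/\ is_point F q, is_limit F v p q,
    (forall u, (u \in q.1) = (u \in p.1) ||
        [exists i, (row i B == u) && (0 < pair (dual B i) v)]) &
    (forall m, q.2 m = if perpb q.1 m then p.2 m else 0)].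
Proof.
move=> Fface sF fB [pF pnz pmul] psub av.
have [uB [sB rB]] := fB.
set tau := p.1.
set E := fun u => [exists i, (row i B == u) && (0 < pair (dual B i) v)].
pose tau' := [fset u in sig | (u \in tau) || E u].
have memt : forall u, (u \in tau') = (u \in tau) || E u.
  move=> u; rewrite !inE /=; apply/andP/idP => [[] //|H]; split => //.
  case/orP: H => [/(fsubsetP psub) //| /existsP [i /andP[/eqP <- _]]]; exact: rB.
have tt' : tau `<=` tau' by apply/fsubsetP => u ut; rewrite memt ut.
have t's : tau' `<=` sig by apply/fsubsetP => u; rewrite !inE /= => /andP[].
exists (tau', fun m => if perpb tau' m then p.2 m else 0); split => //=.
- split => //=; first exact: (Fface sig).
  + move=> m; case: (perpP tau' m) => H; last by split => // /eqP.
    split => // _; apply/pnz => u /(fsubsetP tt'); exact: H.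
  + move=> m m' /perpP Hm /perpP Hm'.
    have Hmm : perpb tau' (m + m')%R.
      by apply/perpP => u ut; rewrite pairDl (perpP _ _ Hm) // (perpP _ _ Hm') // addr0.
    rewrite Hmm Hm Hm'; apply: pmul => u /(fsubsetP tt') ut.
      exact: (perpP _ _ Hm).
    exact: (perpP _ _ Hm').
exists sig => //; split => // m mdual.
case: (eqVneq (p.2 m) 0) => g0.
  exists 0%N; split; first by move=> t _; rewrite /act /= g0 mulr0 mul0r.
  by rewrite /= g0 mul0r; case: ifP.
have pm : perp tau m by apply/pnz.
set a := fun i => pair (dual B i) v.
set f := fun i => a i * pair m (row i B).
have zE : pair m v = \sum_i f i.
  rewrite {1}(expand_row v uB) pair_sumr; apply: eq_bigr => i _; by rewrite pairZr.
have f0 : forall i, 0 <= f i.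
  move=> i; rewrite /f; case: (boolP (row i B \in tau)) => ri.
    by rewrite pm // mulr0.
  by apply: mulr_ge0; [exact: av | exact: mdual].
have z0 : 0 <= pair m v by rewrite zE; apply: sumr_ge0 => i _.
exists `|pair m v|%N; split.
  move=> t _; rewrite /act /= -[pair m v]gez0_abs // -exprnP mulrC //.
rewrite /=; case: (eqVneq (pair m v) 0) => zv.
  rewrite zv /= expr0 mulr1.
  have fz : forall i, f i = 0.
    move=> i; apply: (@psumr_eq0P _ _ predT f) => //.
    by rewrite -zE.
  suff -> : perpb tau' m by [].
  apply/perpP => u; rewrite memt; case/orP; first exact: pm.
  case/existsP => i /andP[/eqP <- ai].
  by have := fz i; rewrite /f => /eqP; rewrite mulf_eq0 (gt_eqF ai) /= => /eqP.
have [i fi] : exists i, 0 < f i.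
  apply/existsP; apply: contraNT zv; rewrite negb_exists => /forallP H.
  rewrite zE big1 // => i _; apply/le_anti; rewrite f0 andbT.
  by have := H i; rewrite -leNgt.
have ri : row i B \notin tau.
  by apply: contraTN fi => ri; rewrite /f pm // mulr0 ltxx.
have ai : 0 < a i.
  move: fi; rewrite /f lt_def mulf_eq0 negb_or => /andP[/andP[ai0 _] _].
  by rewrite lt_def ai0 av.
have pmi : pair m (row i B) != 0.
  by move: fi; rewrite /f lt_def mulf_eq0 negb_or => /andP[/andP[_ ->] _].
have -> : perpb tau' m = false.
  apply/negbTE/negP => /perpP H; move: pmi; rewrite H ?eqxx //.
  rewrite memt; apply/orP; right; apply/existsP; exists i; by rewrite eqxx ai.
rewrite expr0n /=.
have -> : (`|pair m v|%N == 0%N) = false by rewrite absz_eq0 (negbTE zv).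
by rewrite mulr0.
Qed.


Lemma perp_dual B sig (tau : cone n) i : full B sig -> tau `<=` sig ->
  perp tau (dual B i) <-> row i B \notin tau.
Proof.
move=> [uB [sB rB]] ts; split.
  move=> H; apply/negP => /H; rewrite pair_dual_row // eqxx => /eqP; by rewrite oner_eq0.
move=> ri u ut; have [j ej] := sB u (fsubsetP ts u ut).
rewrite -ej pair_dual_row //; case: eqP => // ji; move: ri; by rewrite -ji ej ut.
Qed.

Lemma perp0 (tau : cone n) : perp tau 0.
Proof. by move=> u _; rewrite pair0l. Qed.

Lemma perpD (tau : cone n) m m' : perp tau m -> perp tau m' -> perp tau (m + m')%R.
Proof. by move=> H H' u ut; rewrite pairDl H // H' // addr0. Qed.

Lemma gamma0 F (p : point k n) : is_point F p -> p.2 0 = 1.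
Proof.
move=> [_ pnz pmul]; have nz : p.2 0 != 0 by apply/pnz; exact: perp0.
have := pmul 0 0 (@perp0 _) (@perp0 _); rewrite addr0 => /eqP.
by rewrite -subr_eq0 -{1}[p.2 0]mulr1 -mulrBr mulf_eq0 (negbTE nz) /= subr_eq0 => /eqP <-.
Qed.

Lemma gamma_prod F (p : point k n) B (e : 'I_n -> nat) : is_point F p ->
  (forall i, e i != 0%N -> perp p.1 (dual B i)) ->
  p.2 (\sum_i (e i)%:Z *: dual B i) = \prod_i p.2 (dual B i) ^+ e i /\
  perp p.1 (\sum_i (e i)%:Z *: dual B i).
Proof.
move=> pp he; have [_ pnz pmul] := pp.
apply: (big_rec2 (fun x y => p.2 x = y /\ perp p.1 x)).
  by split; [exact: gamma0 pp | exact: perp0].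
move=> i x y _ [<- px].
have [E1 E2] : p.2 ((e i)%:Z *: dual B i) = p.2 (dual B i) ^+ e i /\
    perp p.1 ((e i)%:Z *: dual B i).
  case: (eqVneq (e i) 0%N) => [-> | /he hd].
    by rewrite scale0r expr0 (gamma0 pp); split => //; exact: perp0.
  elim: (e i) => [|j [IH1 IH2]]; first by rewrite scale0r expr0 (gamma0 pp); split => //; exact: perp0.
  have -> : (j.+1)%:Z *: dual B i = (dual B i + j%:Z *: dual B i)%R.
    by rewrite -[X in (X + _)%R]scale1r -scalerDl intS.
  rewrite pmul // exprS IH1; split => //; exact: perpD.
by rewrite pmul // E1; split => //; exact: perpD.
Qed.
Lemma point_formula F B sig (p : point k n) m : full B sig -> is_point F p ->
  p.1 `<=` sig -> perp p.1 m ->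
  p.2 m * \prod_i p.2 (dual B i) ^+ `|pair m (row i B)|%N =
  \prod_i p.2 (dual B i) ^+ `|(pair m (row i B) + (`|pair m (row i B)|%N)%:Z)%R|%N /\
  \prod_i p.2 (dual B i) ^+ `|pair m (row i B)|%N != 0.
Proof.
move=> fB pp ps pm; have [uB [sB rB]] := fB; have [_ pnz pmul] := pp.
set c := fun i => pair m (row i B).
have hz : forall i, row i B \in p.1 -> c i = 0 by move=> i ri; exact: pm.
have he : forall i, `|c i|%N != 0%N -> perp p.1 (dual B i).
  move=> i nz; apply/(perp_dual i fB ps); apply: contra nz => /hz ->.
  by rewrite ?addr0.
have hf : forall i, `|(c i + (`|c i|%N)%:Z)%R|%N != 0%N -> perp p.1 (dual B i).
  move=> i nz; apply/(perp_dual i fB ps); apply: contra nz => /hz ->.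
  by rewrite ?addr0.
have [Ge Pe] := gamma_prod pp he; have [Gf Pf] := gamma_prod pp hf.
rewrite -Ge -Gf -pmul //; split; last by apply/pnz.
congr (p.2 _); rewrite {1}(expand_dual m uB) -big_split /=; apply: eq_bigr => i _.
rewrite -scalerDl; congr (_ *: _); rewrite /c; lia.
Qed.

Lemma reconstruct F B sig (p1 p2 : point k n) : full B sig ->
  is_point F p1 -> is_point F p2 -> p1.1 `<=` sig -> p2.1 `<=` sig ->
  (forall i, p1.2 (dual B i) = p2.2 (dual B i)) -> p1 = p2.
Proof.
move=> fB pp1 pp2 s1 s2 H; have [uB [sB rB]] := fB.
have [_ pnz1 pmul1] := pp1; have [_ pnz2 pmul2] := pp2.
have T : p1.1 = p2.1.
  apply/fsetP => u; apply/idP/idP => ut.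
    have [i ei] := sB u (fsubsetP s1 u ut); rewrite -ei; apply/negPn/negP.
    move/(perp_dual i fB s2)/pnz2; rewrite -H => /pnz1 /(perp_dual i fB s1).
    by rewrite ei ut.
  have [i ei] := sB u (fsubsetP s2 u ut); rewrite -ei; apply/negPn/negP.
  move/(perp_dual i fB s1)/pnz1; rewrite H => /pnz2 /(perp_dual i fB s2).
  by rewrite ei ut.
move: p1 p2 H T pp1 pp2 s1 s2 pnz1 pnz2 pmul1 pmul2 => [t1 g1] [t2 g2] /= H <- pp1 pp2 s1 s2 pnz1 pnz2 _ _.
f_equal; apply: functional_extensionality => m.
case: (perpP t1 m) => pm; last first.
  have a1 : g1 m = 0 by apply/eqP; apply: contraNT (introN (perpP _ _) pm) => /pnz1 /perpP.
  have a2 : g2 m = 0 by apply/eqP; apply: contraNT (introN (perpP _ _) pm) => /pnz2 /perpP.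
  by rewrite a1 a2.
have [E1 N1] := point_formula fB pp1 s1 pm.
have [E2 N2] := point_formula fB pp2 s2 pm.
move: E1 E2 N1 N2 => /=.
set P1 := \prod_i g1 _ ^+ _; set P2 := \prod_i g2 _ ^+ _.
set Q1 := \prod_i g1 _ ^+ _; set Q2 := \prod_i g2 _ ^+ _.
have -> : P1 = P2 by apply: eq_bigr => i _; rewrite H.
have -> : Q1 = Q2 by apply: eq_bigr => i _; rewrite H.
move=> E1 E2 N _; apply: (mulIf N); by rewrite E1 E2.
Qed.
End Points.

Section Bounds.
Variable n : nat.

Lemma fin_bound (I : finType) (f : I -> int) : exists s, 0 < s /\ forall i, `|f i| < s.
Proof.
exists (1 + \sum_i `|f i|); split => [|i].
  have : 0 <= \sum_i `|f i| by apply: sumr_ge0 => j _.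
  lia.
rewrite (bigD1 i) //=.
have h : 0 <= \sum_(j | j != i) `|f j| by apply: sumr_ge0.
move: h; set S := \sum_(j | j != i) _; move: S => S h.
lia.
Qed.

Definition good (B : 'M[int]_n) (s : int) (w : lat n) :=
  (forall a b, `|invmx B a b| < s) /\ forall i, `|pair (dual B i) w| < s.

Lemma good_mono B s s' w : s <= s' -> good B s w -> good B s' w.
Proof. by move=> ss [h1 h2]; split => [a b|i]; apply: lt_le_trans ss. Qed.

Lemma good_ex B w : exists s, 0 < s /\ good B s w.
Proof.
have [s1 [p1 h1]] := fin_bound (fun x : 'I_n * 'I_n => invmx B x.1 x.2).
have [s2 [p2 h2]] := fin_bound (fun i => pair (dual B i) w).
exists (s1 + s2); split; first by rewrite addr_gt0.
split => [a b|i].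
  by apply: (lt_le_trans (h1 (a, b))); rewrite lerDl ltW.
by apply: (lt_le_trans (h2 i)); rewrite lerDr ltW.
Qed.

Lemma bounds (r : seq (cone n)) (w1 w2 : lat n) :
  (forall sig, sig \in r -> smooth_cone sig) ->
  exists s, 0 < s /\ forall sig, sig \in r -> exists B, [/\ unimod B,
    (forall u, u \in sig -> exists i, row i B = u), good B s w1 & good B s w2].
Proof.
elim: r => [|sig r IH] H; first by exists 1.
have H' : forall x, x \in r -> smooth_cone x by move=> x xr; apply: H; rewrite inE xr orbT.
have [s [s0 Hs]] := IH H'.
have [B [uB sB]] := H sig (mem_head _ _).
have [s1 [p1 g1]] := good_ex B w1; have [s2 [p2 g2]] := good_ex B w2.
exists (s + s1 + s2); split; first by rewrite !addr_gt0.
move=> x; rewrite inE => /orP[/eqP ->|xr].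
  exists B; split => //.
    by apply: good_mono g1; lia.
  by apply: good_mono g2; lia.
have [B' [u' s' h1 h2]] := Hs x xr; exists B'; split => //.
  by apply: good_mono h1; lia.
by apply: good_mono h2; lia.
Qed.
End Bounds.

Section Gen.
Variable n : nat.

Definition gvec (s : int) : lat n := \row_k s ^+ k.

Lemma pair_gvec B i s : pair (dual B i) (gvec s) = \sum_k invmx B k i * s ^+ k.
Proof. by rewrite /pair; apply: eq_bigr => k _; rewrite !mxE. Qed.

Lemma gen (F : {fset cone n}) (tau : cone n) (s : int) :
  smooth_fan F -> complete_fan F -> tau \in F -> 0 < s ->
  (forall sig, sig \in F -> exists B, [/\ unimod B,
    (forall u, u \in sig -> exists i, row i B = u) & good B s (\sum_(u <- tau) u)]) ->
  exists sig B, [/\ sig \in F, full B sig, (tau `<=` sig)%fset &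
    forall i, row i B \notin tau -> 0 < pair (dual B i) (gvec s)].
Proof.
move=> [Fsm Fface Fint] Fc tF s0 Hyp.
set w := \sum_(u <- tau) u.
set x := (gvec s + s ^+ n *: w)%R.
have [rho rF [a [a0 Ha]]] := Fc x.
have [B [uB sB [gB1 gB2]]] := Hyp rho rF.
have pxE : forall i, pair (dual B i) x = pair (dual B i) (gvec s) + s ^+ n * pair (dual B i) w.
  by move=> i; rewrite pairDr pairZr.
have nz : forall i, pair (dual B i) x != 0.
  move=> i; apply/eqP; rewrite pxE pair_gvec mulrC => /(digits s0) [] // _ H.
  have := pair_dual_row i i uB; rewrite eqxx /pair big1 => [|j _].
    by move/eqP; rewrite eq_sym oner_eq0.
  by rewrite mxE H mul0r.
have coordx := coord uB sB Ha.
have rB : forall i, row i B \in rho.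
  move=> i; apply/negPn/negP => ri; move: (coordx i); rewrite (negbTE ri).
  by move/eqP; rewrite intr_eq0 (negbTE (nz i)).
have px : forall i, 0 < pair (dual B i) x.
  move=> i; rewrite lt_def nz /=; have := coordx i; rewrite rB => E.
  by rewrite -(ler0z rat) E.
have fB : full B rho by [].
have pw : forall i, 0 <= pair (dual B i) w.
  move=> i; have := px i; rewrite pxE pair_gvec.
  have := digits_bound s0 (fun k => gB1 k i).
  set G := \sum_k _; set S := s ^+ n; set P := pair _ w.
  have S0 : 0 < S by rewrite exprn_gt0.
  move=> hG hx; rewrite leNgt; apply/negP => P0.
  have : S * P <= - S by rewrite -mulrN1 ler_pM2l //; lia.
  have := ler_norm G; lia.
have wrho : inCone rho w.
  by rewrite (expand_row w uB); apply: inCone_full.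
have Hw : Q w = \sum_(u <- tau) 1 *: Q u.
  by rewrite Q_sum; apply: eq_bigr => u _; rewrite scale1r.
have wtau : inCone tau w by exists (fun _ => 1).
have [b [_ Hb]] := Fint _ _ tF rF w wtau wrho.
have [Bt [uBt sBt]] := Fsm _ tF.
have trho : (tau `<=` rho)%fset.
  apply/fsubsetP => u ut; have [j ej] := sBt u ut.
  have sub : forall u, u \in (tau `&` rho)%fset -> exists i, row i Bt = u.
    by move=> v; rewrite in_fsetI => /andP[/sBt].
  have := coord uBt sub Hb j; rewrite (coord uBt sBt Hw j) ej ut in_fsetI ut /=.
  by case: (u \in rho) => // /eqP; rewrite oner_eq0.
exists rho, B; split => // i ri.
have : pair (dual B i) w = 0.
  apply/eqP; rewrite -(intr_eq0 rat) (coord uB (fun u ut => sB u (fsubsetP trho u ut)) Hw i).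
  by rewrite (negbTE ri).
by move=> pw0; have := px i; rewrite pxE pw0 mulr0 addr0.
Qed.
End Gen.

Section Main.
Local Open Scope fset_scope.

Lemma q_sub (k : fieldType) n (sig : cone n) B (p q : point k n) (v : lat n) :
  full B sig -> p.1 `<=` sig ->
  (forall u, (u \in q.1) = (u \in p.1) ||
        [exists i, (row i B == u) && (0 < pair (dual B i) v)]) -> q.1 `<=` sig.
Proof.
move=> [_ [_ rB]] ps H; apply/fsubsetP => u; rewrite H => /orP[/(fsubsetP ps) //|].
by case/existsP => i /andP[/eqP <- _].
Qed.

Lemma lim_coord (k : fieldType) n F (sig : cone n) B (p q : point k n) (v : lat n) j :
  full B sig -> is_point F p -> p.1 `<=` sig ->
  (forall u, (u \in q.1) = (u \in p.1) ||
        [exists i, (row i B == u) && (0 < pair (dual B i) v)]) ->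
  (forall m, q.2 m = if perpb q.1 m then p.2 m else 0) ->
  pair (dual B j) v = 0 -> q.2 (dual B j) = p.2 (dual B j).
Proof.
move=> fB [_ pnz _] ps Hq1 Hq2 vj; have [uB _] := fB.
have qs := q_sub fB ps Hq1.
have E : (row j B \in q.1) = (row j B \in p.1).
  rewrite Hq1; case: (row j B \in p.1) => //=; apply/negbTE; rewrite negb_exists.
  apply/forallP => i; rewrite (inj_eq (row_inj uB)); case: eqP => //= ->.
  by rewrite vj ltxx.
rewrite Hq2; case: (perpP q.1 (dual B j)) => H //.
have rq : row j B \in q.1.
  by apply/negPn/negP => X; apply: H; apply/(perp_dual j fB qs).
have np : ~ perp p.1 (dual B j).
  by move/(perp_dual j fB ps); rewrite -E rq.
by apply/esym/eqP; apply/negPn/negP => /pnz.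
Qed.
End Main.

Unset Implicit Arguments.
Local Open Scope fset_scope.

Theorem lemma3p2 (k : closedFieldType) (n : nat) (F : {fset cone n})
    (p1 p2 : point k n) :
  smooth_projective_fan F ->
  is_point F p1 -> is_point F p2 -> p1 <> p2 ->
  exists v : lat n, exists q1 q2 : point k n,
    [/\ is_point F q1, is_point F q2,
        is_limit F v p1 q1, is_limit F v p2 q2 &
        [/\ q1 <> q2,
            torus_fixed q1 \/ on_invariant_curve F q1 &
            torus_fixed q2 \/ on_invariant_curve F q2]].
Proof.
move=> [Fsf Fc _] pp1 pp2 neq.
have [Fsm Fface Fint] := Fsf.
set w1 := \sum_(u <- p1.1) u; set w2 := \sum_(u <- p2.1) u.
have [s [s0 Hs]] := bounds w1 w2 Fsm.
have [s1 [B1 [s1F fB1 t1s r1]]] : exists sig B, [/\ sig \in F, full B sig, p1.1 `<=` sig &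
    forall i, row i B \notin p1.1 -> 0 < pair (dual B i) (@gvec n s)].
  apply: gen => //; first by have [] := pp1.
  by move=> sig /Hs [B [? ? ? ?]]; exists B.
have [s2 [B2 [s2F fB2 t2s r2]]] : exists sig B, [/\ sig \in F, full B sig, p2.1 `<=` sig &
    forall i, row i B \notin p2.1 -> 0 < pair (dual B i) (@gvec n s)].
  apply: gen => //; first by have [] := pp2.
  by move=> sig /Hs [B [? ? ? ?]]; exists B.
case: (eqVneq s1 s2) => [e12|n12]; last first.
  set v := @gvec n s.
  have [q1 [qp1 ql1 qm1 _]] := limit_lemma Fface s1F fB1 pp1 t1s (fun i ri => ltW (r1 i ri)).
  have [q2 [qp2 ql2 qm2 _]] := limit_lemma Fface s2F fB2 pp2 t2s (fun i ri => ltW (r2 i ri)).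
  have E : forall (p q : point k n) sig B, full B sig -> p.1 `<=` sig ->
      (forall i, row i B \notin p.1 -> 0 < pair (dual B i) v) ->
      (forall u, (u \in q.1) = (u \in p.1) ||
        [exists i, (row i B == u) && (0 < pair (dual B i) v)]) -> q.1 = sig.
    move=> p q sig B fB ps rp Hq; apply/eqP; rewrite eqEfsubset (q_sub fB ps Hq) /=.
    have [_ [sB _]] := fB.
    apply/fsubsetP => u /sB [i <-]; rewrite Hq; case: (boolP (row i B \in p.1)) => //= ri.
    by apply/existsP; exists i; rewrite eqxx rp.
  have e1 := E _ _ _ _ fB1 t1s r1 qm1.
  have e2 := E _ _ _ _ fB2 t2s r2 qm2.
  exists v, q1, q2; split => //; split.
  - by move=> eq; move: n12; rewrite -e1 -e2 eq eqxx.
  - by left; rewrite /torus_fixed e1 (card_full fB1).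
  - by left; rewrite /torus_fixed e2 (card_full fB2).
subst s2.
have [uB1 [sB1 rB1]] := fB1.
case: (boolP [exists j, p1.2 (dual B1 j) != p2.2 (dual B1 j)]); last first.
  rewrite negb_exists => /forallP H; exfalso; apply: neq.
  apply: (reconstruct fB1 pp1 pp2 t1s t2s) => i; by have := H i; rewrite negbK => /eqP.
case/existsP => j hj.
set c := fun i : 'I_n => ((i != j)%:R : int).
set v := \sum_i c i *: row i B1.
have cv : forall i, pair (dual B1 i) v = c i by move=> i; rewrite pair_dual_sum.
have c0 : forall i, 0 <= c i by move=> i; rewrite /c; case: (i != j).
have av : forall (T : cone n) i, row i B1 \notin T -> 0 <= pair (dual B1 i) v.
  by move=> T i _; rewrite cv.
have [q1 [qp1 ql1 qm1 qv1]] := limit_lemma Fface s1F fB1 pp1 t1s (av _).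
have [q2 [qp2 ql2 qm2 qv2]] := limit_lemma Fface s1F fB1 pp2 t2s (av _).
have cj : pair (dual B1 j) v = 0 by rewrite cv /c eqxx.
have e1 := lim_coord fB1 pp1 t1s qm1 qv1 cj.
have e2 := lim_coord fB1 pp2 t2s qm2 qv2 cj.
have curve : forall (p q : point k n), p.1 `<=` s1 ->
    (forall u, (u \in q.1) = (u \in p.1) ||
        [exists i, (row i B1 == u) && (0 < pair (dual B1 i) v)]) ->
    on_invariant_curve F q.
  move=> p q ps Hq; exists (s1 `\ row j B1).
    by apply: (Fface s1) => //; exact: fsubsetDl.
  split.
    have h := cardfsD1 (row j B1) s1; rewrite rB1 (card_full fB1) add1n in h.
    exact: (esym h).
  apply/fsubsetP => u; rewrite in_fsetD1 => /andP[uj /sB1 [i ei]].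
  rewrite Hq; apply/orP; right; apply/existsP; exists i; rewrite ei eqxx cv /c /=.
  by move: uj; rewrite -ei (inj_eq (row_inj uB1)) => ->.
exists v, q1, q2; split => //; split.
- by move=> eq; move: hj; rewrite -e1 -e2 eq eqxx.
- by right; exact: (curve p1).
- by right; exact: (curve p2).
Qed.
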